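(* Let $X$ be a random variable on $\{1,2,\dots\}$ with probability mass function $f(x)=\frac{x}{(x+1)!}$, $x=1,2,\dots$. Then $\mathbb E(X)=e-1$, $\mathbb E(X^2)=e+1$, $\mathrm{Var}(X)=e(3-e)$, and the moment generating function is \[\mathbb E(e^{tX})=e^{-t}\bigl(1-e^{e^t}+e^{t+e^t}\bigr)\quad\text{for all real } t.\] *)

(* Defs.v *)
From Stdlib Require Import Reals Lra.
From Coquelicot Require Import Coquelicot.
Open Scope R_scope.

Definition pmf (x : nat) : R := INR x / INR (Factorial.fact (x + 1)).

Definition expectation_is (g : R -> R) (v : R) : Prop :=
  is_series (fun n : nat => g (INR (S n)) * pmf (S n)) v.

Definition variance_is (v : R) : Prop :=
  exists mu, expectation_is (fun x => x) mu /\
             expectation_is (fun x => (x - mu) ^ 2) v.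

(* Main.v *)
Require Import Defs.
From Stdlib Require Import Reals Lra Lia Psatz.
From Coquelicot Require Import Coquelicot.
Open Scope R_scope.

Lemma serR (a b : nat -> R) (la l : R) :
  is_series a la -> la = l -> (forall n, a n = b n) -> is_series b l.
Proof. intros H <- E. exact (is_series_ext a b la E H). Qed.

Lemma serP (a b : nat -> R) la lb : is_series a la -> is_series b lb ->
  is_series (fun n => a n + b n) (la + lb).
Proof. intros; now apply (is_series_plus a b). Qed.

Lemma serS (c : R) (a : nat -> R) la : is_series a la ->
  is_series (fun n => c * a n) (c * la).
Proof. intros; now apply (is_series_scal c a). Qed.

Lemma F (n : nat) : INR (Factorial.fact n) <> 0.
Proof. apply INR_fact_neq_0. Qed.

Lemma e0 (s : R) : is_series (fun n => s ^ n / INR (Factorial.fact n)) (exp s).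
Proof.
  generalize (is_exp_Reals s). unfold is_pseries. intro H.
  apply (serR _ _ _ _ H); try reflexivity.
Qed.

Lemma e1 (s : R) : is_series (fun n => s ^ (S n) / ((INR n + 1) * INR (Factorial.fact n))) (exp s - 1).
Proof.
  apply (serR (fun k => s ^ (S k) / INR (Factorial.fact (S k))) _ (exp s - 1)); [|reflexivity|].
  - apply (is_series_incr_1 (fun n => s ^ n / INR (Factorial.fact n))).
    apply (serR _ _ (exp s) _ (e0 s)); [|intro; reflexivity].
    unfold plus; simpl. field.
  - intro n. rewrite fact_simpl, mult_INR, S_INR. reflexivity.
Qed.

Lemma e2 (s : R) : is_series (fun n => s ^ (S (S n)) / ((INR n + 2) * (INR n + 1) * INR (Factorial.fact n))) (exp s - 1 - s).
Proof.
  apply (serR (fun k => s ^ (S (S k)) / ((INR (S k) + 1) * INR (Factorial.fact (S k)))) _ (exp s - 1 - s)); [|reflexivity|].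
  - apply (is_series_incr_1 (fun n => s ^ (S n) / ((INR n + 1) * INR (Factorial.fact n)))).
    apply (serR _ _ (exp s - 1) _ (e1 s)); [|intro; reflexivity].
    unfold plus; simpl. field.
  - intro n. rewrite fact_simpl, !mult_INR, !S_INR. f_equal. ring.
Qed.

Lemma en : is_series (fun n => INR n / INR (Factorial.fact n)) (exp 1).
Proof.
  apply is_series_decr_1.
  apply (serR (fun n => 1 ^ n / INR (Factorial.fact n)) _ (exp 1)); [apply e0| |].
  - unfold plus, opp; simpl. unfold Rdiv. ring.
  - intro n. rewrite fact_simpl, mult_INR, S_INR, pow1. field.
    split; [apply F| pose proof (pos_INR n); lra].
Qed.

Lemma pmfE (n : nat) : pmf (S n) = (INR n + 1) / ((INR n + 2) * (INR n + 1) * INR (Factorial.fact n)).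
Proof.
  unfold pmf. replace (S n + 1)%nat with (S (S n)) by lia.
  rewrite !fact_simpl, !mult_INR, !S_INR. f_equal. ring.
Qed.

Ltac pos := pose proof (F _); pose proof (pos_INR _); repeat split; try lra; auto.

Lemma EX : expectation_is (fun x => x) (exp 1 - 1).
Proof.
  unfold expectation_is.
  eapply (serR _ _ (exp 1 + -1 * (exp 1 - 1) + (exp 1 - 1 - 1))).
  apply serP; [apply serP; [apply e0| apply (serS (-1)), e1] | apply e2].
  ring.
  intro n. rewrite pmfE, S_INR, !pow1. pose proof (F n); pose proof (pos_INR n).
  field. lra.
Qed.

Lemma EX2 : expectation_is (fun x => x ^ 2) (exp 1 + 1).
Proof.
  unfold expectation_is.
  eapply (serR _ _ (exp 1 + (exp 1 - 1) + -1 * (exp 1 - 1 - 1))).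
  apply serP; [apply serP; [apply en| apply e1] | apply (serS (-1)), e2].
  ring.
  intro n. rewrite pmfE, S_INR, !pow1. pose proof (F n); pose proof (pos_INR n).
  field. lra.
Qed.

Lemma E1 : expectation_is (fun _ => 1) 1.
Proof.
  unfold expectation_is.
  eapply (serR _ _ ((exp 1 - 1) + -1 * (exp 1 - 1 - 1))).
  apply serP; [apply e1 | apply (serS (-1)), e2].
  ring.
  intro n. rewrite pmfE, !pow1. pose proof (F n); pose proof (pos_INR n).
  field. lra.
Qed.

Lemma VX : variance_is (exp 1 * (3 - exp 1)).
Proof.
  exists (exp 1 - 1). split. apply EX. unfold expectation_is.
  eapply (serR _ _ ((exp 1 + 1) + (-2 * (exp 1 - 1)) * (exp 1 - 1) + (exp 1 - 1)^2 * 1)).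
  apply serP; [apply serP; [apply EX2 | apply serS, EX] | apply serS, E1].
  ring.
  intro n. simpl. ring.
Qed.

Lemma MGF (t : R) : expectation_is (fun x => exp (t * x))
       (exp (- t) * (1 - exp (exp t) + exp (t + exp t))).
Proof.
  unfold expectation_is.
  eapply (serR _ _ ((exp (exp t) - 1) + - exp (- t) * (exp (exp t) - 1 - exp t))).
  apply serP; [apply e1 | apply serS, e2].
  rewrite exp_plus. assert (exp (-t) * exp t = 1) by (rewrite <- exp_plus; replace (-t+t) with 0 by ring; apply exp_0).
  replace (exp (-t) * (1 - exp (exp t) + exp t * exp (exp t))) with (exp (-t) - exp (-t) * exp (exp t) + (exp (-t) * exp t) * exp (exp t)) by ring.
  transitivity (exp (exp t) - 1 - exp (-t) * exp (exp t) + exp (-t) + (exp (-t) * exp t)); [ring|].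
  rewrite H. ring.
  intro n. rewrite pmfE.
  assert (Hp : forall k, exp t ^ k = exp (t * INR k)).
  { induction k. simpl. rewrite Rmult_0_r, exp_0; auto.
    rewrite S_INR, <- tech_pow_Rmult, IHk, <- exp_plus. f_equal; ring. }
  rewrite !Hp, !S_INR.
  replace (t * (INR n + 1 + 1)) with (t * (INR n + 1) + t) by ring.
  rewrite exp_plus.
  assert (exp (-t) * exp t = 1) by (rewrite <- exp_plus; replace (-t+t) with 0 by ring; apply exp_0).
  pose proof (F n); pose proof (pos_INR n).
  field_simplify; [| lra | lra].
  idtac.
  replace (exp (t * (INR n + 1)) * exp (- t) * exp t) with (exp (t * (INR n + 1)) * (exp (- t) * exp t)) by ring. rewrite H. assert (0 < INR (Factorial.fact n)) by (apply lt_0_INR, Factorial.lt_O_fact). field. split; nra.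
Qed.

Theorem mainTheorem3 :
  expectation_is (fun x => x) (exp 1 - 1) /\
  expectation_is (fun x => x ^ 2) (exp 1 + 1) /\
  variance_is (exp 1 * (3 - exp 1)) /\
  (forall t : R,
     expectation_is (fun x => exp (t * x))
       (exp (- t) * (1 - exp (exp t) + exp (t + exp t)))).
Proof. split; [apply EX|split; [apply EX2|split; [apply VX|apply MGF]]]. Qed.
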